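(* Let $\mathcal D$ be a fixed strict fundamental domain for the action of $R_\omega$ by translations on $K_\omega$. There exists a bijection from $R^{2,\sharp}_{\omega,\rm prim}$ to $\Gamma^\sharp\cap(P^-U^+_{\mathcal D})$ of the form $v\mapsto\gamma_v=\begin{pmatrix}v&w_v\end{pmatrix}$ (the matrix with first column $v$ and second column some $w_v\in R_\omega^2$) such that for every $n\in\mathbb Z$, for all measurable subsets $\Theta$ of $\mathbb S^1_\omega$ and $\mathcal D'$ of $\mathcal D$, and for every nonzero ideal $I$ of $R_\omega$, the following are equivalent: (1) $\|v\|_\omega=q_\omega^n$, $y_v\in I$, $\overline v\in\Theta$ and $x_{w_v}/x_v\in\mathcal D'$; (2) $\gamma_v\in\Gamma_0[I]$ and $\gamma_v\in P^-_\Theta A_nU^+_{\mathcal D'}$.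
   Context: $K$ is a global function field over a finite field $\mathbb{F}_q$ (function field of a geometrically connected smooth projective curve $\mathbf C$ over $\mathbb F_q$), $\omega$ a normalized discrete valuation of $K$, $K_\omega$ the completion, $\mathcal O_\omega$ its valuation ring, $\pi_\omega$ a fixed uniformizer, $q_\omega$ the order of the residue field, $|x|_\omega=q_\omega^{-\omega(x)}$, and $R_\omega$ the ring of elements of $K$ whose only poles are at $\omega$. Elements of $K_\omega^2$ are written $v=(x_v,y_v)$ and identified with column vectors; $\|v\|_\omega=\max\{|x_v|_\omega,|y_v|_\omega\}$, $\overline v=\pi_\omega^{\log_{q_\omega}\|v\|_\omega}v$, $\mathbb S^1_\omega=\{v:\|v\|_\omega=1\}$. $R^2_{\omega,\rm prim}=\{(a,b)\in R_\omega^2:aR_\omega+bR_\omega=R_\omega\}$ and $R^{2,\sharp}_{\omega,\rm prim}=\{(a,b)\in R^2_{\omega,\rm prim}:|a|_\omega\ge|b|_\omega\}$. $G=\mathrm{SL}_2(K_\omega)$, $\Gamma=\mathrm{SL}_2(R_\omega)$, $\Gamma^\sharp=\{\begin{pmatrix}\alpha&\gamma\\ \beta&\delta\end{pmatrix}\in\Gamma:|\alpha|_\omega\ge|\beta|_\omega\}$, $\Gamma_0[I]=\{\begin{pmatrix}a&c\\ b&d\end{pmatrix}\in\Gamma:b\in I\}$. $P^-$ is the lower triangular subgroup of $G$, $P^-(\mathcal O_\omega)=P^-\cap\mathcal M_2(\mathcal O_\omega)$, $U^+$ the upper unipotent subgroup. For $\Theta\subset\mathbb S^1_\omega$, $P^-_\Theta$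 is the set of elements of $P^-(\mathcal O_\omega)$ whose first column lies in $\Theta$; $A_n=\{\mathrm{diag}(\pi_\omega^{-n},\pi_\omega^n)\}$; for $\mathcal D'\subset K_\omega$, $U^+_{\mathcal D'}=\{\begin{pmatrix}1&\gamma\\0&1\end{pmatrix}:\gamma\in\mathcal D'\}$. *)

(* Defs.v *)
From mathcomp Require Import all_boot all_order all_algebra.
Set Implicit Arguments. Unset Strict Implicit. Unset Printing Implicit Defensive.
Import Order.TTheory GRing.Theory Num.Theory.
Local Open Scope ring_scope.

(* A normalized discrete valuation u : T -> int, with the convention u 0 = 0
   (the value at 0 is irrelevant, u(0) "= +oo" is handled separately). *)
Definition is_ndval (T : fieldType) (u : T -> int) : Prop :=
  [/\ u 0 = 0,
      forall x y, x != 0 -> y != 0 -> u (x * y) = u x + u y,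
      forall x y, x != 0 -> y != 0 -> x + y != 0 ->
        Order.min (u x) (u y) <= u (x + y)
    & exists x, x != 0 /\ u x = 1].

Definition algebraic_over (F K : fieldType) (iota : {rmorphism F -> K}) (x : K) :=
  exists p : {poly F}, p != 0 /\ (map_poly iota p).[x] = 0.

(* K is a finite extension of a rational function field F(t), and F is
   algebraically closed in K (full constant field): K is the function field of
   a geometrically connected smooth projective curve over F = F_q. *)
Definition is_global_function_field (F : finFieldType) (K : fieldType)
  (iota : {rmorphism F -> K}) : Prop :=
  (exists t : K, ~ algebraic_over iota t /\
     exists (n : nat) (b : 'I_n -> K), forall x : K,
       exists p q : 'I_n -> {poly F}, (forall i, q i != 0) /\
         x = \sum_(i < n) ((map_poly iota (p i)).[t] / (map_poly iota (q i)).[t]) * b i)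
  /\ (forall x : K, algebraic_over iota x -> exists a : F, x = iota a).

(* R_omega: elements of K whose only poles are at omega *)
Definition Romega (K : fieldType) (om : K -> int) (x : K) : Prop :=
  forall u : K -> int, is_ndval u -> (exists z, z != 0 /\ u z != om z) ->
    x != 0 -> 0 <= u x.

Definition close (Kw : fieldType) (wv : Kw -> int) (k : int) (a b : Kw) : Prop :=
  a = b \/ k <= wv (a - b).

Definition is_completion (K Kw : fieldType) (j : {rmorphism K -> Kw})
  (om : K -> int) (wv : Kw -> int) : Prop :=
  [/\ forall x, x != 0 -> wv (j x) = om x,
      forall a : nat -> Kw,
        (forall k, exists N, forall m n, (N <= m)%N -> (N <= n)%N -> close wv k (a m) (a n)) ->
        exists l, forall k, exists N, forall n, (N <= n)%N -> close wv k (a n) l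
    &
      forall (x : Kw) (k : int), exists y : K, close wv k x (j y)].

Definition Rw (K Kw : fieldType) (j : {rmorphism K -> Kw}) (om : K -> int) (z : Kw) : Prop :=
  exists x, Romega om x /\ z = j x.

Section Norms.
Variables (Kw : fieldType) (wv : Kw -> int).

(* |a|_omega >= |b|_omega *)
Definition absge (a b : Kw) : Prop := b = 0 \/ (a != 0 /\ wv a <= wv b).

(* log_{q_omega} ||v||_omega for v <> 0 *)
Definition lnorm (v : Kw * Kw) : int :=
  if v.1 == 0 then - wv v.2 else if v.2 == 0 then - wv v.1
  else - Order.min (wv v.1) (wv v.2).

Definition norm_is_pow (v : Kw * Kw) (n : int) : Prop := v <> (0, 0) /\ lnorm v = n.

Definition sphere1 (v : Kw * Kw) : Prop := norm_is_pow v 0.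

Definition vbar (pi : Kw) (v : Kw * Kw) : Kw * Kw :=
  (pi ^ (lnorm v) * v.1, pi ^ (lnorm v) * v.2).

Definition inO (x : Kw) : Prop := x = 0 \/ 0 <= wv x.

Definition open1 (U : Kw -> Prop) : Prop :=
  forall x, U x -> exists k, forall y, close wv k x y -> U y.
Definition open2 (U : Kw * Kw -> Prop) : Prop :=
  forall x, U x -> exists k, forall y, close wv k x.1 y.1 -> close wv k x.2 y.2 -> U y.
End Norms.

Definition is_sigma_algebra (T : Type) (S : (T -> Prop) -> Prop) : Prop :=
  [/\ S (fun _ => True),
      forall A, S A -> S (fun x => ~ A x)
    & forall A : nat -> T -> Prop, (forall n, S (A n)) -> S (fun x => exists n, A n x)].

Definition borel (T : Type) (op : (T -> Prop) -> Prop) (A : T -> Prop) : Prop :=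
  forall S, is_sigma_algebra S -> (forall U, op U -> S U) -> S A.

Definition prim2sharp (Kw : fieldType) (R : Kw -> Prop) (wv : Kw -> int) (v : Kw * Kw) : Prop :=
  [/\ R v.1, R v.2, (exists a b, R a /\ R b /\ a * v.1 + b * v.2 = 1) & absge wv v.1 v.2].

Definition is_nonzero_ideal (Kw : fieldType) (R : Kw -> Prop) (I : Kw -> Prop) : Prop :=
  [/\ forall x, I x -> R x, I 0,
      forall x y, I x -> I y -> I (x + y),
      forall r x, R r -> I x -> I (r * x)
    & exists x, I x /\ x != 0].

Definition strict_fund_dom (Kw : fieldType) (R : Kw -> Prop) (D : Kw -> Prop) : Prop :=
  forall x : Kw, exists! r, R r /\ D (x + r).

Definition i0 : 'I_2 := ord0.
Definition i1 : 'I_2 := ord_max.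

(* the matrix ((a, c), (b, d)) *)
Definition mx2 (T : Type) (a c b d : T) : 'M[T]_2 :=
  \matrix_(i < 2, j < 2)
    if val i == 0%N then (if val j == 0%N then a else c)
    else (if val j == 0%N then b else d).

Definition mcol1 (T : Type) (M : 'M[T]_2) : T * T := (M i0 i0, M i1 i0).
Definition mcol2 (T : Type) (M : 'M[T]_2) : T * T := (M i0 i1, M i1 i1).

Section Groups.
Variables (Kw : fieldType) (wv : Kw -> int) (R : Kw -> Prop).

Definition SL2 (M : 'M[Kw]_2) : Prop := \det M = 1.
Definition GammaR (M : 'M[Kw]_2) : Prop := SL2 M /\ forall i j, R (M i j).
Definition Gamma_sharp (M : 'M[Kw]_2) : Prop := GammaR M /\ absge wv (M i0 i0) (M i1 i0).
Definition Gamma0 (I : Kw -> Prop) (M : 'M[Kw]_2) : Prop := GammaR M /\ I (M i1 i0).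
Definition Pminus (M : 'M[Kw]_2) : Prop := SL2 M /\ M i0 i1 = 0.
Definition PminusO (M : 'M[Kw]_2) : Prop := Pminus M /\ forall i j, inO wv (M i j).
Definition PminusTheta (Th : Kw * Kw -> Prop) (M : 'M[Kw]_2) : Prop :=
  PminusO M /\ Th (mcol1 M).
Definition An (pi : Kw) (n : int) : 'M[Kw]_2 := mx2 (pi ^ (- n)) 0 0 (pi ^ n).
Definition Uplus (g : Kw) : 'M[Kw]_2 := mx2 1 g 0 1.
Definition PU (D : Kw -> Prop) (M : 'M[Kw]_2) : Prop :=
  exists p g, Pminus p /\ D g /\ M = p *m Uplus g.
Definition PThetaAU (pi : Kw) (Th : Kw * Kw -> Prop) (n : int) (D' : Kw -> Prop)
  (M : 'M[Kw]_2) : Prop :=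
  exists p g, PminusTheta Th p /\ D' g /\ M = p *m An pi n *m Uplus g.
End Groups.

(* Main.v *)
Require Import Defs.
From mathcomp Require Import all_boot all_order all_algebra.
From mathcomp Require Import ring zify.
From Stdlib Require Import ClassicalEpsilon.
Set Implicit Arguments. Unset Strict Implicit. Unset Printing Implicit Defensive.
Import Order.TTheory GRing.Theory Num.Theory.
Local Open Scope ring_scope.


Lemma mx2_eta (T : Type) (M : 'M[T]_2) : M = mx2 (M i0 i0) (M i0 i1) (M i1 i0) (M i1 i1).
Proof.
apply/matrixP => i j; rewrite !mxE.
case: i => [[|[|i]] Hi] //; case: j => [[|[|j]] Hj] //=; congr (M _ _); exact: val_inj.
Qed.

Lemma mx2E (T : Type) (a c b d : T) :
  [/\ mx2 a c b d i0 i0 = a, mx2 a c b d i0 i1 = c, mx2 a c b d i1 i0 = b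
    & mx2 a c b d i1 i1 = d].
Proof. by rewrite !mxE. Qed.

Lemma mx2_inj (T : Type) (a c b d a' c' b' d' : T) :
  mx2 a c b d = mx2 a' c' b' d' -> [/\ a = a', c = c', b = b' & d = d'].
Proof.
move=> H; split.
- by move: (congr1 (fun M : 'M[T]_2 => M i0 i0) H); rewrite !mxE.
- by move: (congr1 (fun M : 'M[T]_2 => M i0 i1) H); rewrite !mxE.
- by move: (congr1 (fun M : 'M[T]_2 => M i1 i0) H); rewrite !mxE.
- by move: (congr1 (fun M : 'M[T]_2 => M i1 i1) H); rewrite !mxE.
Qed.

Lemma mulmx2 (T : comNzRingType) (a c b d a' c' b' d' : T) :
  mx2 a c b d *m mx2 a' c' b' d' =
  mx2 (a*a'+c*b') (a*c'+c*d') (b*a'+d*b') (b*c'+d*d').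
Proof.
apply/matrixP => i j; rewrite !mxE !big_ord_recr big_ord0 /= add0r !mxE /=.
by case: i => [[|[|i]] Hi] //; case: j => [[|[|j]] Hj].
Qed.

Lemma det_mx2 (T : comNzRingType) (a c b d : T) : \det (mx2 a c b d) = a*d - c*b.
Proof.
rewrite (expand_det_row _ ord0) !big_ord_recr big_ord0 /= add0r /cofactor !det_mx11 !mxE /=.
rewrite !expr0 !mul1r. simpl. ring.
Qed.

Lemma mx2_ind (P : 'I_2 -> 'I_2 -> Prop) :
  P i0 i0 -> P i0 i1 -> P i1 i0 -> P i1 i1 -> forall i j, P i j.
Proof.
move=> H1 H2 H3 H4 i j.
have Ei : i = i0 \/ i = i1.
  case: i => [[|[|i]] Hi] //; [left|right]; exact: val_inj.
have Ej : j = i0 \/ j = i1.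
  case: j => [[|[|j]] Hj] //; [left|right]; exact: val_inj.
by case: Ei => ->; case: Ej => ->.
Qed.

Lemma nv1 (T : fieldType) (u : T -> int) : is_ndval u -> u 1 = 0.
Proof.
case=> _ HM _ _; have := HM 1 1 (oner_neq0 _) (oner_neq0 _); rewrite mulr1; lia.
Qed.

Lemma nvM (T : fieldType) (u : T -> int) x y : is_ndval u -> x != 0 -> y != 0 ->
  u (x * y) = u x + u y.
Proof. by case=> _ HM _ _; apply: HM. Qed.

Lemma nvN1 (T : fieldType) (u : T -> int) : is_ndval u -> u (-1) = 0.
Proof.
move=> Hu; have N1 : (-1 : T) != 0 by rewrite oppr_eq0 oner_neq0.
have := nvM Hu N1 N1.
rewrite mulrNN mulr1 nv1 //; lia.
Qed.

Lemma nvN (T : fieldType) (u : T -> int) x : is_ndval u -> u (- x) = u x.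
Proof.
move=> Hu; have [->|Hx] := eqVneq x 0; first by rewrite oppr0.
by rewrite -mulN1r nvM ?nvN1 ?add0r // oppr_eq0 oner_neq0.
Qed.

Lemma nvV (T : fieldType) (u : T -> int) x : is_ndval u -> x != 0 -> u (x^-1) = - u x.
Proof.
move=> Hu Hx; have := nvM Hu Hx (invr_neq0 Hx); rewrite mulfV // nv1 //; lia.
Qed.

Lemma nvpow (T : fieldType) (u : T -> int) x (z : int) : is_ndval u -> u x = 1 ->
  u (x ^ z) = z.
Proof.
move=> Hu Hx.
have x0 : x != 0 by apply/eqP => E; move: Hx; rewrite E; case: Hu => -> _ _ _.
have Hn : forall n : nat, u (x ^+ n) = n.
  elim=> [|n IH]; first by rewrite expr0 nv1.
  rewrite exprS nvM // ?expf_neq0 // IH Hx; lia.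
case: z => n; first exact: Hn.
rewrite NegzE -exprnN nvV ?expf_neq0 // Hn; lia.
Qed.

Lemma Rom0 (K : fieldType) (om : K -> int) : Romega om 0.
Proof. by move=> u _ _; rewrite eqxx. Qed.

Lemma Rom1 (K : fieldType) (om : K -> int) : Romega om 1.
Proof. by move=> u Hu _ _; rewrite nv1. Qed.

Lemma RomN (K : fieldType) (om : K -> int) x : Romega om x -> Romega om (- x).
Proof. by move=> H u Hu Hne; rewrite oppr_eq0 nvN //; apply: H. Qed.

Lemma RomM (K : fieldType) (om : K -> int) x y : Romega om x -> Romega om y ->
  Romega om (x * y).
Proof.
move=> H1 H2 u Hu Hne; rewrite mulf_eq0 negb_or => /andP [x0 y0].
rewrite nvM //; apply: addr_ge0; [exact: H1|exact: H2].
Qed.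

Lemma RomD (K : fieldType) (om : K -> int) x y : Romega om x -> Romega om y ->
  Romega om (x + y).
Proof.
move=> H1 H2 u Hu Hne Hs.
have [x0|x0] := eqVneq x 0; first by move: Hs; rewrite x0 add0r; apply: H2.
have [y0|y0] := eqVneq y 0; first by move: Hs; rewrite y0 addr0; apply: H1.
case: (Hu) => _ _ Hmin _; apply: le_trans (Hmin _ _ x0 y0 Hs).
by rewrite le_min (H1 u) // (H2 u).
Qed.

Lemma Rw0 (K Kw : fieldType) (j : {rmorphism K -> Kw}) om : Rw j om 0.
Proof. by exists 0; rewrite rmorph0; split => //; apply: Rom0. Qed.
Lemma Rw1 (K Kw : fieldType) (j : {rmorphism K -> Kw}) om : Rw j om 1.
Proof. by exists 1; rewrite rmorph1; split => //; apply: Rom1. Qed.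
Lemma RwN (K Kw : fieldType) (j : {rmorphism K -> Kw}) om x : Rw j om x -> Rw j om (- x).
Proof. by case=> y [Hy ->]; exists (- y); rewrite rmorphN; split => //; apply: RomN. Qed.
Lemma RwD (K Kw : fieldType) (j : {rmorphism K -> Kw}) om x y : Rw j om x -> Rw j om y ->
  Rw j om (x + y).
Proof.
by case=> x' [Hx ->] [y' [Hy ->]]; exists (x' + y'); rewrite rmorphD; split => //; apply: RomD.
Qed.
Lemma RwM (K Kw : fieldType) (j : {rmorphism K -> Kw}) om x y : Rw j om x -> Rw j om y ->
  Rw j om (x * y).
Proof.
by case=> x' [Hx ->] [y' [Hy ->]]; exists (x' * y'); rewrite rmorphM; split => //; apply: RomM.
Qed.


Lemma lnorm_absge (Kw : fieldType) (wv : Kw -> int) a b :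
  a != 0 -> absge wv a b -> lnorm wv (a, b) = - wv a.
Proof.
move=> Ha Hab; rewrite /lnorm /= (negbTE Ha).
case: eqP => // Hb; case: Hab => [//|[_ H]]; by rewrite min_l.
Qed.

Lemma a_neq0 (Kw : fieldType) (wv : Kw -> int) a b c d :
  a * d - c * b = 1 -> absge wv a b -> a != 0.
Proof.
move=> Hdet [Hb|[]] //; apply/eqP => Ha; move: Hdet; rewrite Ha Hb !mul0r mulr0 subr0.
by move/eqP; rewrite eq_sym oner_eq0.
Qed.

Lemma solve_d (Kw : fieldType) (a b c d : Kw) :
  a != 0 -> a * d - c * b = 1 -> d = (1 + c * b) / a.
Proof. by move=> Ha <-; field. Qed.

Lemma good_intro (Kw : fieldType) (wv : Kw -> int) (R D : Kw -> Prop) a b c d :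
  a * d - c * b = 1 -> R a -> R b -> R c -> R d -> absge wv a b -> a != 0 -> D (c / a) ->
  Gamma_sharp wv R (mx2 a c b d) /\ PU D (mx2 a c b d).
Proof.
move=> Hdet Ra Rb Rc Rd Hab Ha HD.
have [E1 E2 E3 E4] := mx2E a c b d.
split; first split; first split.
- by rewrite /SL2 det_mx2.
- by apply: (@mx2_ind (fun i j => R (mx2 a c b d i j))); rewrite !mxE.
- by rewrite !mxE.
exists (mx2 a 0 b a^-1), (c / a); split; first split.
- by rewrite /SL2 det_mx2; field.
- by rewrite mxE.
split => //.
rewrite /Uplus mulmx2 (solve_d Ha Hdet); congr mx2; by field.
Qed.

Lemma good_elim (Kw : fieldType) (wv : Kw -> int) (R D : Kw -> Prop) a b c d :
  Gamma_sharp wv R (mx2 a c b d) -> PU D (mx2 a c b d) ->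
  [/\ a * d - c * b = 1, [/\ R a, R b, R c & R d], absge wv a b, a != 0 & D (c / a)].
Proof.
move=> [[Hdet HR] Hab] [p [g [[Hpdet Hp01] [Hg HM]]]].
move: Hdet Hab; rewrite /SL2 det_mx2 !mxE /= => Hdet Hab.
have Ha := a_neq0 Hdet Hab.
split => //.
- split; [move: (HR i0 i0)|move: (HR i1 i0)|move: (HR i0 i1)|move: (HR i1 i1)]; by rewrite mxE.
move: HM; rewrite (mx2_eta p) Hp01 /Uplus mulmx2 => HM; have [E1 E2 _ _] := mx2_inj HM.
have Ea : a = p i0 i0 by rewrite E1; ring.
have Ec : c = a * g by rewrite E2 Ea; ring.
have -> : c / a = g by rewrite Ec; field.
done.
Qed.

Lemma exists_good (Kw : fieldType) (wv : Kw -> int) (R D : Kw -> Prop) a b :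
  R 0 -> (forall x, R x -> R (- x)) -> (forall x y, R x -> R y -> R (x + y)) ->
  (forall x y, R x -> R y -> R (x * y)) ->
  strict_fund_dom R D -> prim2sharp R wv (a, b) ->
  exists c d, [/\ a * d - c * b = 1, R c, R d & D (c / a)].
Proof.
move=> R0 RN RD RM HD [/= Ra Rb [x [y [Rx [Ry Hxy]]]] Hab].
have Ha : a != 0.
  apply/eqP => Ha0; case: Hab => [Hb0|[]]; last by rewrite Ha0 eqxx.
  by move: Hxy; rewrite Ha0 Hb0 !mulr0 addr0 => /eqP; rewrite eq_sym oner_eq0.
have [r [[Rr Dr] _]] := HD ((- y) / a).
exists (- y + r * a), (x + r * b); split.
- by rewrite -Hxy; ring.
- by apply: RD; [apply: RN|apply: RM].
- by apply: RD => //; apply: RM.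
- by have -> : (- y + r * a) / a = - y / a + r by field.
Qed.

Lemma uniq_cd (Kw : fieldType) (R D : Kw -> Prop) a b c d c' d' :
  R 0 -> (forall x, R x -> R (- x)) -> (forall x y, R x -> R y -> R (x + y)) ->
  (forall x y, R x -> R y -> R (x * y)) ->
  strict_fund_dom R D -> a != 0 ->
  a * d - c * b = 1 -> R c -> R d -> D (c / a) ->
  a * d' - c' * b = 1 -> R c' -> R d' -> D (c' / a) -> c = c' /\ d = d'.
Proof.
move=> R0 RN RD RM HD Ha H1 Rc Rd Dc H2 Rc' Rd' Dc'.
pose t := d * c' - c * d'.
have Rt : R t by apply: RD; [apply: RM|apply: RN; apply: RM].
have E1 : a * d = 1 + c * b by rewrite -H1; ring.
have E2 : a * d' = 1 + c' * b by rewrite -H2; ring.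
have Ec' : c' = c + t * a.
  have -> : c + t * a = c + (a * d) * c' - (a * d') * c by rewrite /t; ring.
  by rewrite E1 E2; ring.
have [r [_ Hu]] := HD (c / a).
have r0 : r = 0 by apply: Hu; rewrite addr0.
have rt : r = t.
  by apply: Hu; split => //; have <- : c' / a = c / a + t by rewrite Ec'; field.
have Hc : c = c'.
  by rewrite Ec' -rt r0 mul0r addr0.
split => //; apply: (mulfI Ha); by rewrite E1 E2 Hc.
Qed.


Lemma part5 (Kw : fieldType) (wv : Kw -> int) (pi : Kw) (R : Kw -> Prop) a b c d
  (n : int) (Th : Kw * Kw -> Prop) (D' : Kw -> Prop) (I : Kw -> Prop) :
  is_ndval wv -> wv pi = 1 -> GammaR R (mx2 a c b d) ->
  a * d - c * b = 1 -> absge wv a b -> a != 0 ->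
  ([/\ norm_is_pow wv (a, b) n, I b, Th (vbar wv pi (a, b)) & D' (c / a)]
   <-> (Gamma0 R I (mx2 a c b d) /\ PThetaAU wv pi Th n D' (mx2 a c b d))).
Proof.
move=> Hwv Hpi HGR Hdet Hab Ha.
have Pn0 : pi ^ n != 0.
  by apply: expfz_neq0; apply/eqP => E; move: Hpi; rewrite E; case: Hwv => -> _ _ _.
have vP : wv (pi ^ n) = n by apply: nvpow.
have vPV : wv ((pi ^ n)^-1) = - n by rewrite nvV // vP.
have Hd := solve_d Ha Hdet.
rewrite /PThetaAU /An -invr_expz.
move: Pn0 vP vPV; set P := pi ^ n => Pn0 vP vPV.
split.
- move=> [[Hne Hn] HIb HTh HD'].
  rewrite lnorm_absge // in Hn.
  split; first by split => //; rewrite mxE.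
  exists (mx2 (P * a) 0 (P * b) (P^-1 / a)), (c / a); split; last split => //.
  + split; first split; first split.
    * by rewrite /SL2 det_mx2; field; rewrite Ha Pn0.
    * by rewrite mxE.
    * apply: (@mx2_ind (fun i j => inO wv (mx2 (P * a) 0 (P * b) (P^-1 / a) i j))); rewrite !mxE /=.
      -- right; rewrite nvM // vP; lia.
      -- by left.
      -- have [->|Hb] := eqVneq b 0; first by left; rewrite mulr0.
         right; rewrite nvM // vP; case: Hab => [E|[_ H]]; first by rewrite E eqxx in Hb.
         lia.
      -- right; rewrite nvM ?invr_neq0 // vPV nvV //; lia.
    * move: HTh; rewrite /vbar /mcol1 /= lnorm_absge // Hn -/P !mxE /=.
      done.
  + rewrite /Uplus !mulmx2 Hd; congr mx2; by field; rewrite ?Ha ?Pn0.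
- move=> [[_ HIb] [p [g [[[[Hpdet Hp01] HpO] HTh] [Hg HM]]]]].
  move: HIb; rewrite mxE /= => HIb.
  have Hp00 := HpO i0 i0; have Hp11 := HpO i1 i1.
  move: Hpdet HTh HM Hp00 Hp11; rewrite /SL2 (mx2_eta p) Hp01 det_mx2 /mcol1 !mxE /=.
  move: (p i0 i0) (p i1 i0) (p i1 i1) => p0 p1 p3 Hpdet HTh HM Hp00 Hp11.
  rewrite /Uplus !mulmx2 in HM.
  have [E1 E2 E3 _] := mx2_inj HM.
  have Ea : a = p0 / P by rewrite E1; ring.
  have Eb : b = p1 / P by rewrite E3; ring.
  have Ec : c = p0 / P * g by rewrite E2; ring.
  have p00 : p0 != 0 by apply/eqP => E; move: Hpdet; rewrite E !mul0r subr0 => /eqP; rewrite eq_sym oner_eq0.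
  have p30 : p3 = p0^-1 by apply/(mulfI p00); rewrite mulfV // -Hpdet; ring.
  have vp0 : wv p0 = 0.
    case: Hp00 => [E|H0]; first by rewrite E eqxx in p00.
    case: Hp11 => [E|H1]; first by move: E; rewrite p30 => /eqP; rewrite invr_eq0 (negbTE p00).
    move: H1; rewrite p30 nvV //; lia.
  have va : wv a = - n by rewrite Ea nvM ?invr_neq0 // vp0 vPV; lia.
  have Hn : lnorm wv (a, b) = n by rewrite lnorm_absge // va; lia.
  split => //.
  + split => //; case=> Ha0 _; by rewrite Ha0 eqxx in Ha.
  + rewrite /vbar /= Hn -/P Ea Eb.
    have -> : P * (p0 / P) = p0 by field.
    have -> : P * (p1 / P) = p1 by field.
    done.
  + by rewrite Ec Ea; have -> : p0 / P * g / (p0 / P) = g by field; rewrite p00 Pn0.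
Qed.


Unset Implicit Arguments.

Theorem proposition3p1 (F : finFieldType) (K : fieldType) (iota : {rmorphism F -> K})
  (om : K -> int) (Kw : fieldType) (j : {rmorphism K -> Kw}) (wv : Kw -> int)
  (pi : Kw) (D : Kw -> Prop) :
  is_global_function_field iota -> is_ndval om -> is_ndval wv ->
  is_completion j om wv -> wv pi = 1 ->
  strict_fund_dom (Rw j om) D ->
  let R := Rw j om in
  exists gam : Kw * Kw -> 'M[Kw]_2,
    [/\ forall v, prim2sharp R wv v -> Gamma_sharp wv R (gam v) /\ PU D (gam v),
        forall v v', prim2sharp R wv v -> prim2sharp R wv v' -> gam v = gam v' -> v = v',
        forall M, Gamma_sharp wv R M -> PU D M -> exists2 v, prim2sharp R wv v & gam v = M,
        forall v, prim2sharp R wv v -> mcol1 (gam v) = v /\ R (mcol2 (gam v)).1 /\ R (mcol2 (gam v)).2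
      & forall v, prim2sharp R wv v ->
        forall (n : int) (Th : Kw * Kw -> Prop) (D' : Kw -> Prop) (I : Kw -> Prop),
          (forall u, Th u -> sphere1 wv u) -> borel (open2 wv) Th ->
          (forall x, D' x -> D x) -> borel (open1 wv) D' ->
          is_nonzero_ideal R I ->
          ([/\ norm_is_pow wv v n, I v.2, Th (vbar wv pi v) & D' ((mcol2 (gam v)).1 / v.1)]
           <-> (Gamma0 R I (gam v) /\ PThetaAU wv pi Th n D' (gam v)))].
Proof.
move=> _ _ Hwv _ Hpi HD R.
have R0 : R 0 by apply: Rw0.
have RN : forall x, R x -> R (- x) by move=> x; apply: RwN.
have RD : forall x y, R x -> R y -> R (x + y) by move=> x y; apply: RwD.
have RM : forall x y, R x -> R y -> R (x * y) by move=> x y; apply: RwM.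
pose good v M := [/\ Gamma_sharp wv R M, PU D M & mcol1 M = v].
have Hform : forall v M, good v M -> exists c d, M = mx2 v.1 c v.2 d.
  move=> v M [_ _ <-]; exists (M i0 i1), (M i1 i1); exact: mx2_eta.
have Hex : forall v, prim2sharp R wv v -> exists M, good v M.
  move=> [a b] Hv.
  have [c [d [Hdet Rc Rd Dc]]] := exists_good R0 RN RD RM HD Hv.
  case: (Hv) => /= Ra Rb _ Hab.
  have Ha := a_neq0 Hdet Hab.
  have [HG HP] := good_intro Hdet Ra Rb Rc Rd Hab Ha Dc.
  exists (mx2 a c b d); split => //; by rewrite /mcol1 !mxE.
have Huniq : forall v M M', good v M -> good v M' -> M = M'.
  move=> v M M' HM HM'.
  have [c [d EM]] := Hform _ _ HM; have [c' [d' EM']] := Hform _ _ HM'.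
  case: HM => HG HP _; case: HM' => HG' HP' _.
  rewrite EM in HG HP; rewrite EM' in HG' HP'.
  have [H1 [_ _ Rc Rd] _ Ha Dc] := good_elim HG HP.
  have [H2 [_ _ Rc' Rd'] _ _ Dc'] := good_elim HG' HP'.
  have [Ec Ed] := uniq_cd R0 RN RD RM HD Ha H1 Rc Rd Dc H2 Rc' Rd' Dc'.
  by rewrite EM EM' Ec Ed.
pose gam v := epsilon (inhabits (0 : 'M[Kw]_2)) (good v).
have Hgam : forall v, prim2sharp R wv v -> good v (gam v).
  by move=> v Hv; apply: epsilon_spec; apply: Hex.
exists gam; split.
- by move=> v /Hgam [].
- move=> v v' Hv Hv' E.
  have [_ _ E1] := Hgam v Hv; have [_ _ E2] := Hgam v' Hv'.
  by rewrite -E1 -E2 E.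
- move=> M HG HP.
  have [a [c [b [d EM]]]] : exists a c b d, M = mx2 a c b d.
    by exists (M i0 i0), (M i0 i1), (M i1 i0), (M i1 i1); exact: mx2_eta.
  rewrite EM in HG HP *.
  have [H1 [Ra Rb Rc Rd] Hab Ha Dc] := good_elim HG HP.
  have Hv : prim2sharp R wv (a, b).
    split => //; exists d, (- c); split => //; split; first exact: RN.
    by rewrite /= -H1; ring.
  exists (a, b) => //.
  apply: (Huniq (a, b)); first exact: Hgam.
  by split => //; rewrite /mcol1 !mxE.
- move=> v Hv; have HM := Hgam v Hv.
  have [c [d EM]] := Hform _ _ HM.
  case: (HM) => HG HP Hc; split => //.
  rewrite EM in HG HP *.
  have [_ [_ _ Rc Rd] _ _ _] := good_elim HG HP.
  by rewrite /mcol2 !mxE.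
- move=> v Hv n Th D' I _ _ _ _ _.
  have HM := Hgam v Hv.
  have [c [d EM]] := Hform _ _ HM.
  case: (HM) => HG HP _.
  rewrite EM in HG HP *.
  have [H1 _ Hab Ha _] := good_elim HG HP.
  case: v Hv EM HM HG HP H1 Hab Ha => a b /= Hv EM HM HG HP H1 Hab Ha.
  rewrite /mcol2 mxE /=.
  exact: part5 Hwv Hpi HG.1 H1 Hab Ha.
Qed.
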